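(* Let $G$ be the corresponding graph of an array $A$ with reach one, let $F$ be a resulting DFS forest of $G$, and let $T$ be a component of $F$ whose root $v$ has exactly two children $a_1,b_1$ (i.e. $T$ has two sub-trees stemming from the root). Apply the sub-tree merge to $T$ and let $H$ be $T$ together with all arcs added. Then $H$ contains a directed Hamiltonian path, i.e. a directed path visiting every vertex of $T$ exactly once.
   Context: An array is a finite sequence $A=(A[1],\dots,A[n])$ of pairwise distinct real numbers. The corresponding graph of $A$ with reach one is the directed graph on $\{1,\dots,n\}$ with an arc $(i,j)$ whenever $j\equiv i\pm1\pmod n$, $j\ne i$, and $A[i]<A[j]$. DFS is run with adjacency lists sorted in increasing $A$-value and a visiting list containing all vertices; the resulting DFS forest consists of the arcs $(\mathrm{parent}(w),w)$ along which DFS discovers vertices, and its components (of the underlying undirected graph) are rooted trees. Sub-tree merge of $T$: set $p=a_1$, $q=b_1$; while both $p,q$ are defined: if $A[p]<A[q]$, add the arc $(p,q)$ and replace $p$ by its smallest-valued child in $F$ (undefined if it has none); otherwise add the arc $(q,p)$ and replace $q$ by its smallest-valued child in $F$ (undefined if none). *)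

(* Defs.v *)
From mathcomp Require Import all_boot all_order all_algebra.
From mathcomp Require Import reals.
Set Implicit Arguments. Unset Strict Implicit. Unset Printing Implicit Defensive.
Import Order.TTheory GRing.Theory Num.Theory.
Local Open Scope ring_scope.

Section Defs.
Variables (R : realType) (n : nat) (A : 'I_n -> R).

Definition nbr (i j : 'I_n) : bool :=
  (j != i) && ((val j == (val i).+1 %% n)%N || (val i == (val j).+1 %% n)%N).

Definition garc (i j : 'I_n) : bool := nbr i j && (A i < A j).

Definition adj (u : 'I_n) : seq 'I_n :=
  sort (fun x y => A x <= A y) [seq w <- enum 'I_n | garc u w].

(* DFS state: (visited vertices, discovery arcs (parent, child)) *)
Definition dstate := (seq 'I_n * seq ('I_n * 'I_n))%type.

Fixpoint dfs_visit (fuel : nat) (u : 'I_n) (st : dstate) : dstate :=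
  match fuel with
  | 0 => st
  | f.+1 =>
      foldl (fun (st : dstate) w =>
               if w \in st.1 then st
               else dfs_visit f w (st.1, rcons st.2 (u, w)))
            (u :: st.1, st.2) (adj u)
  end.

(* the DFS forest (as its set of arcs) produced with visiting list s *)
Definition dfs_forest (s : seq 'I_n) : seq ('I_n * 'I_n) :=
  (foldl (fun (st : dstate) v => if v \in st.1 then st else dfs_visit n v st)
         ([::], [::]) s).2.

Definition und (F : seq ('I_n * 'I_n)) : rel 'I_n :=
  fun x y => ((x, y) \in F) || ((y, x) \in F).

Definition in_comp (F : seq ('I_n * 'I_n)) (v x : 'I_n) : bool :=
  connect (und F) v x.

Definition min_child (F : seq ('I_n * 'I_n)) (u : 'I_n) : option 'I_n :=
  ohead (sort (fun x y => A x <= A y) [seq w <- enum 'I_n | (u, w) \in F]).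

(* the sub-tree merge loop; returns the added arcs. Fuel n is enough since
   each iteration moves p or q to a fresh vertex. *)
Fixpoint merge_loop (F : seq ('I_n * 'I_n)) (fuel : nat) (p q : option 'I_n)
  : seq ('I_n * 'I_n) :=
  match fuel with
  | 0 => [::]
  | f.+1 =>
      match p, q with
      | Some p', Some q' =>
          if A p' < A q' then (p', q') :: merge_loop F f (min_child F p') q
          else (q', p') :: merge_loop F f p (min_child F q')
      | _, _ => [::]
      end
  end.

Definition subtree_merge (F : seq ('I_n * 'I_n)) (a1 b1 : 'I_n) :=
  merge_loop F n (Some a1) (Some b1).

Definition H_arcs (F : seq ('I_n * 'I_n)) (v a1 b1 : 'I_n) : seq ('I_n * 'I_n) :=
  [seq e <- F | in_comp F v e.1 && in_comp F v e.2] ++ subtree_merge F a1 b1.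

Definition ham_path (H : seq ('I_n * 'I_n)) (V : pred 'I_n) : Prop :=
  exists s : seq 'I_n,
    [/\ uniq s, (forall x, (x \in s) = V x) &
        sorted (fun x y => (x, y) \in H) s].

End Defs.

(* Main.v *)
Require Import Defs.
From mathcomp Require Import all_boot all_order all_algebra.
From mathcomp Require Import reals.
From mathcomp Require Import zify.
Import Order.TTheory GRing.Theory Num.Theory.
Set Implicit Arguments. Unset Strict Implicit. Unset Printing Implicit Defensive.
Local Open Scope ring_scope.



Definition PreI (R : realType) (n : nat) (A : 'I_n -> R) (u : 'I_n) (st : dstate n) :=
  [/\ uniq st.1, uniq (map snd st.2), (forall e, e \in st.2 -> e.2 \in u :: st.1)
    & (forall e, e \in st.2 -> garc A e.1 e.2)].
Definition InvI (R : realType) (n : nat) (A : 'I_n -> R) (st : dstate n) :=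
  [/\ uniq st.1, uniq (map snd st.2), (forall e, e \in st.2 -> e.2 \in st.1)
    & (forall e, e \in st.2 -> garc A e.1 e.2)].

Lemma size_lt_n (n : nat) (s : seq 'I_n) u : uniq s -> u \notin s -> (size s < n)%N.
Proof.
move=> us un.
have h : uniq (u :: s) by rewrite /= un us.
have := max_card (mem (u :: s)).
by rewrite (card_uniqP h) card_ord.
Qed.

Lemma visit_ok (R : realType) (n : nat) (A : 'I_n -> R) f :
  forall u st, PreI A u st -> u \notin st.1 -> (n - size st.1 <= f)%N ->
  InvI A (dfs_visit A f u st) /\ {subset u :: st.1 <= (dfs_visit A f u st).1}.
Proof.
elim: f => [|f IH] u st [u1 u2 u3 u4] un hf.
  have := size_lt_n u1 un; move: hf; rewrite leqn0 subn_eq0 => hf; by rewrite ltnNge hf.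
rewrite /=.
have gen : forall l (st' : dstate n), (forall w, w \in l -> garc A u w) ->
    InvI A st' -> {subset u :: st.1 <= st'.1} ->
    InvI A (foldl (fun (st : dstate n) w =>
               if w \in st.1 then st
               else dfs_visit A f w (st.1, rcons st.2 (u, w))) st' l) /\
    {subset u :: st.1 <= (foldl (fun (st : dstate n) w =>
               if w \in st.1 then st
               else dfs_visit A f w (st.1, rcons st.2 (u, w))) st' l).1}.
  elim=> [|w l IHl] st' hl Iv sub; first by [].
  rewrite /=; case: ifP => hw.
    by apply: IHl => // x hx; apply: hl; rewrite in_cons hx orbT.
  case: Iv => v1 v2 v3 v4.
  have hsz : (size (u :: st.1) <= size st'.1)%N.
    apply: uniq_leq_size => //; by rewrite /= un u1.
  have hP : PreI A w (st'.1, rcons st'.2 (u, w)).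
    split => //=.
    + rewrite map_rcons rcons_uniq v2 andbT; apply/negP => /mapP [e he ew].
      by move: (v3 e he); rewrite -ew hw.
    + move=> e; rewrite mem_rcons in_cons => /orP [/eqP -> | he].
        by rewrite mem_head.
      by rewrite in_cons (v3 e he) orbT.
    + move=> e; rewrite mem_rcons in_cons => /orP [/eqP -> | he]; last exact: v4.
      by apply: hl; rewrite mem_head.
  have hw' : w \notin (st'.1, rcons st'.2 (u, w)).1 by rewrite /= hw.
  have hf' : (n - size (st'.1, rcons st'.2 (u, w)).1 <= f)%N.
    rewrite /=; move: hsz hf => /=; lia.
  have [I1 S1] := IH w _ hP hw' hf'.
  apply: IHl => //.
    by move=> x hx; apply: hl; rewrite in_cons hx orbT.
  move=> x hx; apply: S1; rewrite in_cons (sub x hx) orbT //.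
apply: gen.
- by move=> w; rewrite mem_sort mem_filter => /andP [].
- split => //=.
  + by rewrite un u1.
- by [].
Qed.

Lemma forest_inv (R : realType) (n : nat) (A : 'I_n -> R) (s : seq 'I_n) :
  InvI A (foldl (fun (st : dstate n) v => if v \in st.1 then st else dfs_visit A n v st)
         ([::], [::]) s).
Proof.
have : InvI A (([::], [::]) : dstate n) by split.
elim: s ([::], [::]) => [|v s IH] st Iv //=.
apply: IH; case: ifP => // hv.
case: Iv => v1 v2 v3 v4.
have hP : PreI A v st by split => // e he; rewrite in_cons v3 ?orbT.
have hv' : v \notin st.1 by rewrite hv.
have hf' : (n - size st.1 <= n)%N by rewrite leq_subr.
by case: (visit_ok hP hv' hf').
Qed.

Lemma forest_garc (R : realType) (n : nat) (A : 'I_n -> R) s x y :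
  (x, y) \in dfs_forest A s -> garc A x y.
Proof. by case: (forest_inv A s) => _ _ _ h /h. Qed.

Lemma uniq_snd (T : eqType) (s : seq (T * T)) x x' y :
  uniq (map snd s) -> (x, y) \in s -> (x', y) \in s -> x = x'.
Proof.
elim: s => [|[a b] s IH] //= /andP [hn hu].
rewrite !in_cons => /orP [/eqP [ea eb] | h1] /orP [/eqP [ea' eb'] | h2].
- by rewrite ea ea'.
- by case/negP: hn; apply/mapP; exists (x', y); rewrite // eb.
- by case/negP: hn; apply/mapP; exists (x, y); rewrite // eb'.
- exact: IH.
Qed.

Lemma forest_indeg (R : realType) (n : nat) (A : 'I_n -> R) s x x' y :
  (x, y) \in dfs_forest A s -> (x', y) \in dfs_forest A s -> x = x'.
Proof. by case: (forest_inv A s) => _ h _ _; apply: uniq_snd. Qed.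



Lemma succ_mod_inj (n : nat) (j k : 'I_n) : ((val j).+1 %% n = (val k).+1 %% n)%N -> j = k.
Proof.
have E : forall m, (m < n)%N -> ((m.+1 %% n) = if m.+1 == n then 0 else m.+1)%N.
  move=> m hm; case: eqP => [->|ne]; first by rewrite modnn.
  by rewrite modn_small //; lia.
have hj := ltn_ord j; have hk := ltn_ord k.
rewrite (E _ hj) (E _ hk) => h; apply: val_inj => /=.
move: h; do 2 case: eqP; lia.
Qed.

Lemma nbr_cases (R : realType) (n : nat) (u j : 'I_n) :
  nbr u j -> (val j = (val u).+1 %% n)%N \/ ((val j).+1 %% n = val u)%N.
Proof. by case/andP => _ /orP [/eqP h | /eqP h]; [left | right]. Qed.

Lemma three_nbrs (R : realType) (n : nat) (u w c1 c2 : 'I_n) :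
  nbr u w -> nbr u c1 -> nbr u c2 -> w != c1 -> w != c2 -> c1 != c2 -> False.
Proof.
move=> /(nbr_cases R) hw /(nbr_cases R) h1 /(nbr_cases R) h2 /eqP n1 /eqP n2 /eqP n3.
case: hw => hw; case: h1 => h1.
- by apply: n1; apply: val_inj; rewrite hw h1.
- case: h2 => h2.
  + by apply: n2; apply: val_inj; rewrite hw h2.
  + by apply: n3; apply: succ_mod_inj; rewrite h1 h2.
- case: h2 => h2.
  + by apply: n3; apply: val_inj; rewrite h1 h2.
  + by apply: n2; apply: succ_mod_inj; rewrite hw h2.
- by apply: n1; apply: succ_mod_inj; rewrite hw h1.
Qed.

Lemma connect_last (T : finType) (e : rel T) x y :
  connect e x y -> x = y \/ exists z, connect e x z /\ e z y.
Proof.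
case/connectP => p; elim/last_ind: p => [|p c _] /=; first by move=> _ ->; left.
rewrite rcons_path last_rcons => /andP [hp hc] ->; right; exists (last x p); split => //.
by apply/connectP; exists p.
Qed.

Lemma connect_first (T : finType) (e : rel T) x y :
  connect e x y -> x = y \/ exists z, e x z /\ connect e z y.
Proof.
case/connectP => [[|c p]] /=; first by move=> _ ->; left.
move=> /andP [hc hp] ->; right; exists c; split => //.
by apply/connectP; exists p.
Qed.

Lemma connect_mono (T : finType) (R : realType) (A : T -> R) (e : rel T) :
  (forall x y, e x y -> A x < A y) -> forall x y, connect e x y -> A x <= A y.
Proof.
move=> he x y /connectP [p]; elim: p x => [|c p IH] x /=; first by move=> _ ->.
move=> /andP [hc hp] hy; apply: le_trans (ltW (he _ _ hc)) _; exact: IH.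
Qed.

Lemma back_total (T : finType) (e : rel T) :
  (forall x x' y, e x y -> e x' y -> x = x') ->
  forall x y z, connect e x z -> connect e y z -> connect e x y \/ connect e y x.
Proof.
move=> hin x y z /connectP [p]; elim/last_ind: p z => [|p c IH] z /=.
  by move=> _ -> hy; right.
rewrite rcons_path last_rcons => /andP [hp hc] hz hy; subst z.
case: (connect_last hy) => [hyc | [w [hyw hwc]]].
  by subst y; left; apply/connectP; exists (rcons p c); rewrite ?rcons_path ?hp ?hc ?last_rcons.
rewrite (hin _ _ _ hwc hc) in hyw.
exact: IH hp erefl hyw.
Qed.

Lemma fwd_total (T : finType) (e : rel T) :
  (forall x c1 c2, (exists w, e w x) -> e x c1 -> e x c2 -> c1 = c2) ->
  forall z x y, (exists w, e w z) -> connect e z x -> connect e z y ->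
  connect e x y \/ connect e y x.
Proof.
move=> hu z x y hz /connectP [p]; elim: p z hz => [|c p IH] z hz /=.
  by move=> _ -> hy; left.
move=> /andP [hc hp] hx hy.
case: (connect_first hy) => [<- | [c' [hc' hcy]]].
  by right; apply/connectP; exists (c :: p); rewrite /= ?hc.
rewrite (hu _ _ _ hz hc' hc) in hcy.
apply: IH hp hx hcy; by exists z.
Qed.



Definition Fr (n : nat) (F : seq ('I_n * 'I_n)) : rel 'I_n := fun x y => (x, y) \in F.

Definition Good (R : realType) (n : nat) (A : 'I_n -> R) (F : seq ('I_n * 'I_n))
  (v a1 b1 : 'I_n) :=
  [/\ injective A, (forall x y, (x, y) \in F -> garc A x y),
      (forall x x' y, (x, y) \in F -> (x', y) \in F -> x = x'),
      (forall u, (u, v) \notin F) &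
      a1 != b1 /\ (forall w, ((v, w) \in F) = (w == a1) || (w == b1))].

Definition Sset (n : nat) (F : seq ('I_n * 'I_n)) (v a1 b1 x : 'I_n) :=
  [|| x == v, connect (Fr F) a1 x | connect (Fr F) b1 x].

Lemma Sset_sym n F (v a1 b1 x : 'I_n) : Sset F v a1 b1 x = Sset F v b1 a1 x.
Proof. by rewrite /Sset; case: (x == v); case: (connect _ a1 x); case: (connect _ b1 x). Qed.

Lemma Good_sym (R : realType) n (A : 'I_n -> R) F v a1 b1 : Good A F v a1 b1 -> Good A F v b1 a1.
Proof.
case=> h1 h2 h3 h4 [h5 h6]; split => //; split; first by rewrite eq_sym.
by move=> w; rewrite h6 orbC.
Qed.

Lemma nbr_sym n (i j : 'I_n) : nbr i j = nbr j i.
Proof. by rewrite /nbr eq_sym orbC. Qed.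


Lemma Flt (R : realType) n (A : 'I_n -> R) F v a1 b1 : Good A F v a1 b1 ->
  forall x y, Fr F x y -> A x < A y.
Proof. by case=> _ h2 _ _ _ x y /h2 /andP []. Qed.

Lemma Fuc (R : realType) n (A : 'I_n -> R) F v a1 b1 : Good A F v a1 b1 ->
  forall x c1 c2, (exists w, Fr F w x) -> Fr F x c1 -> Fr F x c2 -> c1 = c2.
Proof.
move=> G x c1 c2 [w hw] h1 h2.
case: (G) => _ hg _ _ _.
have lw := Flt G hw; have l1 := Flt G h1; have l2 := Flt G h2.
case: (eqVneq c1 c2) => // ne; exfalso.
move: (hg _ _ hw) (hg _ _ h1) (hg _ _ h2) => /andP [n1 _] /andP [n2 _] /andP [n3 _].
rewrite nbr_sym in n1.
apply: (three_nbrs R n1 n2 n3 _ _ ne).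
- by apply/eqP => e; subst; move: (lt_trans lw l1); rewrite ltxx.
- by apply/eqP => e; subst; move: (lt_trans lw l2); rewrite ltxx.
Qed.

Lemma Fle (R : realType) n (A : 'I_n -> R) F v a1 b1 : Good A F v a1 b1 ->
  forall x y, connect (Fr F) x y -> A x <= A y.
Proof. move=> G; apply: connect_mono; exact: Flt G. Qed.

Lemma va1 (R : realType) n (A : 'I_n -> R) F v a1 b1 : Good A F v a1 b1 -> Fr F v a1.
Proof. by case=> _ _ _ _ [_ h]; rewrite /Fr h eqxx. Qed.

Lemma ch_gt (R : realType) n (A : 'I_n -> R) F v a1 b1 : Good A F v a1 b1 ->
  forall z, connect (Fr F) a1 z -> A v < A z.
Proof. move=> G z hz; exact: lt_le_trans (Flt G (va1 G)) (Fle G hz). Qed.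

Lemma ch_par (R : realType) n (A : 'I_n -> R) F v a1 b1 : Good A F v a1 b1 ->
  forall z, connect (Fr F) a1 z -> exists w, Fr F w z.
Proof.
move=> G z hz; case: (connect_last hz) => [<- | [w [_ hw]]]; last by exists w.
by exists v; exact: va1 G.
Qed.

Lemma disj (R : realType) n (A : 'I_n -> R) F v a1 b1 : Good A F v a1 b1 ->
  forall z, connect (Fr F) a1 z -> connect (Fr F) b1 z -> False.
Proof.
have gen : forall a b, Good A F v a b -> connect (Fr F) a b -> False.
  move=> a b G hab; case: (G) => _ _ hin _ [hne _].
  case: (connect_last hab) => [e | [w [haw hwb]]]; first by rewrite e eqxx in hne.
  have := va1 (Good_sym G); move/(hin _ _ _ hwb) => ew; subst w.
  by move: (ch_gt G haw); rewrite ltxx.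
move=> G z ha hb; case: (G) => _ _ hin _ _.
case: (back_total hin ha hb) => h; [exact: gen G h | exact: gen (Good_sym G) h].
Qed.

Lemma S_closed (R : realType) n (A : 'I_n -> R) F v a1 b1 : Good A F v a1 b1 ->
  forall x y, Fr F x y -> Sset F v a1 b1 x = Sset F v a1 b1 y.
Proof.
have half : forall a b, Good A F v a b -> forall x y, Fr F x y ->
    connect (Fr F) a y -> Sset F v a b x.
  move=> a b G x y hxy hy; case: (G) => _ _ hin _ _.
  case: (connect_last hy) => [e | [w [haw hwy]]].
    subst y; rewrite (hin _ _ _ hxy (va1 G)) /Sset eqxx //.
  by rewrite (hin _ _ _ hxy hwy) /Sset haw orbT.
move=> G x y hxy; apply/idP/idP.
- case/or3P => [/eqP e | h | h].
  + subst x; case: (G) => _ _ _ _ [_ h6]; move: hxy; rewrite /Fr h6 => /orP [] /eqP ->;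
    by rewrite /Sset connect0 ?orbT.
  + by rewrite /Sset (connect_trans h (connect1 hxy)) orbT.
  + by rewrite /Sset (connect_trans h (connect1 hxy)) !orbT.
- case/or3P => [/eqP e | h | h].
  + by subst y; case: (G) => _ _ _ h4 _; move: (h4 x); rewrite -/(Fr F x v) hxy.
  + exact: half G x y hxy h.
  + by rewrite Sset_sym; exact: half (Good_sym G) x y hxy h.
Qed.

Lemma comp_iff (R : realType) n (A : 'I_n -> R) F v a1 b1 : Good A F v a1 b1 ->
  forall x, in_comp F v x = Sset F v a1 b1 x.
Proof.
move=> G x; apply/idP/idP.
- case/connectP => p hp ->.
  have key : forall p w, Sset F v a1 b1 w -> path (und F) w p ->
      Sset F v a1 b1 (last w p).
    elim=> [|y q IH] w hw //= /andP [hu hq]; apply: IH hq.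
    case/orP: hu => h; first by rewrite -(S_closed G h).
    by rewrite (S_closed G h).
  by apply: key hp; rewrite /Sset eqxx.
- have sub : subrel (Fr F) (connect (und F)).
    by move=> y z h; apply: connect1; rewrite /und -/(Fr F y z) h.
  have hva : forall a, Fr F v a -> connect (Fr F) a x -> connect (und F) v x.
    move=> a h1 h2; apply: connect_trans (sub _ _ h1) (connect_sub sub h2).
  case/or3P => [/eqP -> | h | h]; first exact: connect0.
  + exact: hva (va1 G) h.
  + exact: hva (va1 (Good_sym G)) h.
Qed.



Lemma mc_some (R : realType) n (A : 'I_n -> R) F p c :
  Fr F p c -> exists h, min_child A F p = Some h /\ Fr F p h.
Proof.
move=> hpc; rewrite /min_child; set l := sort _ _.
have hc : c \in l by rewrite /l mem_sort mem_filter mem_enum andbT.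
have hm : forall z, z \in l -> Fr F p z by move=> z; rewrite /l mem_sort mem_filter => /andP [].
clearbody l; case: l hc hm => [|h t] // _ hm; exists h; split => //.
by apply: hm; rewrite mem_head.
Qed.

Lemma my_neq_lt (R : realType) n (A : 'I_n -> R) x y :
  injective A -> x != y -> A x <= A y -> A x < A y.
Proof.
move=> hi ne le; rewrite lt_neqAle le andbT; apply/eqP => e.
by move/eqP: ne; apply; apply: hi.
Qed.

Lemma mc_next (R : realType) n (A : 'I_n -> R) F v a1 b1 : Good A F v a1 b1 ->
  forall p x, connect (Fr F) a1 p -> connect (Fr F) a1 x -> A p < A x ->
  exists c, [/\ min_child A F p = Some c, Fr F p c, connect (Fr F) a1 c & A c <= A x].
Proof.
move=> G p x hp hx lpx.
have hz : exists w, Fr F w a1 by exists v; exact: va1 G.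
case: (fwd_total (Fuc G) hz hp hx) => h; last first.
  by move: (Fle G h); rewrite leNgt lpx.
case: (connect_first h) => [e | [c' [hpc hcx]]]; first by subst; rewrite ltxx in lpx.
have [h' [hmc hph]] := mc_some A hpc.
have e := Fuc G (ch_par G hp) hph hpc; subst h'.
exists c'; split => //.
  exact: connect_trans hp (connect1 hpc).
exact: (Fle G hcx).
Qed.

Lemma same_chain (R : realType) n (A : 'I_n -> R) F v a1 b1 : Good A F v a1 b1 ->
  forall x y, connect (Fr F) a1 x -> connect (Fr F) a1 y -> A x < A y ->
  (forall z, Sset F v a1 b1 z -> A x < A z -> A z < A y -> False) -> Fr F x y.
Proof.
move=> G x y hx hy lxy nb.
have [c [_ hxc hc lcy]] := mc_next G hx hy lxy.
case: (eqVneq c y) => [<- // | ne].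
case: (G) => hi _ _ _ _.
exfalso; apply: (nb c); first by rewrite /Sset hc orbT.
- exact: (Flt G hxc).
- exact: my_neq_lt hi ne lcy.
Qed.

Definition mu (R : realType) n (A : 'I_n -> R) F (a1 b1 p q : 'I_n) :=
  #|[pred z | (connect (Fr F) a1 z && (A p <= A z)) || (connect (Fr F) b1 z && (A q <= A z))]|.

Lemma mu_sym (R : realType) n (A : 'I_n -> R) F a1 b1 p q : mu A F a1 b1 p q = mu A F b1 a1 q p.
Proof. by apply: eq_card => z; rewrite !inE orbC. Qed.

Lemma card_lt (T : finType) (P Q : {pred T}) p :
  p \in P -> (forall z, z \in Q -> (z \in P) && (z != p)) -> (#|Q| < #|P|)%N.
Proof.
move=> hp h; rewrite (cardD1 p P) hp add1n ltnS; apply: subset_leq_card.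
by apply/subsetP => z /h /andP [h1 h2]; rewrite inE h2 h1.
Qed.

Lemma mu_decA (R : realType) n (A : 'I_n -> R) F v a1 b1 : Good A F v a1 b1 ->
  forall p q c, connect (Fr F) a1 p -> A p < A c ->
  (mu A F a1 b1 c q < mu A F a1 b1 p q)%N.
Proof.
move=> G p q c hp lpc; apply: (card_lt (p := p)); first by rewrite inE hp lexx.
move=> z; rewrite !inE => /orP [/andP [h1 h2] | /andP [h1 h2]].
- rewrite h1 (ltW (lt_le_trans lpc h2)) /=; apply/eqP => e; subst z.
  by move: (lt_le_trans lpc h2); rewrite ltxx.
- rewrite h1 h2 orbT /=; apply/eqP => e; subst z; exact: (disj G hp h1).
Qed.

Lemma mu_decB (R : realType) n (A : 'I_n -> R) F v a1 b1 : Good A F v a1 b1 ->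
  forall p q c, connect (Fr F) b1 q -> A q < A c ->
  (mu A F a1 b1 p c < mu A F a1 b1 p q)%N.
Proof. by move=> G p q c hq lqc; rewrite !(mu_sym A F a1); exact: (mu_decA (Good_sym G) _ hq lqc). Qed.



Lemma merge_ok (R : realType) n (A : 'I_n -> R) F v a1 b1 : Good A F v a1 b1 ->
  forall f p q, connect (Fr F) a1 p -> connect (Fr F) b1 q ->
  (mu A F a1 b1 p q <= f)%N ->
  forall x y, A x < A y ->
  (forall z, Sset F v a1 b1 z -> A x < A z -> A z < A y -> False) ->
  ((connect (Fr F) a1 x && (A p <= A x)) && (connect (Fr F) b1 y && (A q <= A y))) ||
  ((connect (Fr F) b1 x && (A q <= A x)) && (connect (Fr F) a1 y && (A p <= A y))) ->
  (x, y) \in merge_loop A F f (Some p) (Some q).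
Proof.
move=> G; case: (G) => hi _ _ _ _.
have SA : forall z, connect (Fr F) a1 z -> Sset F v a1 b1 z by move=> z h; rewrite /Sset h orbT.
have SB : forall z, connect (Fr F) b1 z -> Sset F v a1 b1 z by move=> z h; rewrite /Sset h !orbT.
elim=> [|f IH] p q hp hq hmu x y lxy nb hc.
  have : (0 < mu A F a1 b1 p q)%N by apply/card_gt0P; exists p; rewrite inE hp lexx.
  by rewrite leqn0 in hmu; rewrite (eqP hmu).
rewrite /=; case: ifP => hpq.
  case/orP: hc => [/andP [/andP [hxa lpx] /andP [hyb lqy]] | /andP [/andP [hxb lqx] /andP [hya lpy]]].
  - case: (eqVneq x p) => [exp | nxp].
      subst x; case: (eqVneq y q) => [-> | nyq]; first by rewrite mem_head.
      exfalso; apply: (nb q (SB _ hq) hpq); apply: (my_neq_lt hi _ lqy); by rewrite eq_sym.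
    have lpx' : A p < A x by apply: (my_neq_lt hi _ lpx); rewrite eq_sym.
    have [c [hmc hpc hc lcx]] := mc_next G hp hxa lpx'.
    rewrite hmc in_cons; apply/orP; right; apply: IH => //.
      by rewrite -ltnS; exact: (leq_trans (mu_decA G q hp (Flt G hpc)) hmu).
    by rewrite hxa lcx hyb lqy.
  - have lpy' : A p < A y.
      apply: (my_neq_lt hi _ lpy) => //; apply/eqP => e; subst y.
      by move: (lt_trans hpq (le_lt_trans lqx lxy)); rewrite ltxx.
    have [c [hmc hpc hc lcy]] := mc_next G hp hya lpy'.
    rewrite hmc in_cons; apply/orP; right; apply: IH => //.
      by rewrite -ltnS; exact: (leq_trans (mu_decA G q hp (Flt G hpc)) hmu).
    by rewrite hxb lqx hya lcy orbT.
have lqp : A q < A p.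
  apply: (my_neq_lt hi _ _); last by rewrite leNgt hpq.
  by apply/eqP => e; subst q; exact: (disj G hp hq).
case/orP: hc => [/andP [/andP [hxa lpx] /andP [hyb lqy]] | /andP [/andP [hxb lqx] /andP [hya lpy]]].
- have lqy' : A q < A y.
    apply: (my_neq_lt hi _ lqy) => //; apply/eqP => e; subst y.
    by move: (lt_trans lqp (le_lt_trans lpx lxy)); rewrite ltxx.
  have [c [hmc hqc hc lcy]] := mc_next (Good_sym G) hq hyb lqy'.
  rewrite hmc in_cons; apply/orP; right; apply: IH => //.
    by rewrite -ltnS; exact: (leq_trans (mu_decB G p hq (Flt G hqc)) hmu).
  by rewrite hxa lpx hyb lcy.
- case: (eqVneq x q) => [exq | nxq].
    subst x; case: (eqVneq y p) => [-> | nyp]; first by rewrite mem_head.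
    exfalso; apply: (nb p (SA _ hp) lqp); apply: (my_neq_lt hi _ lpy); by rewrite eq_sym.
  have lqx' : A q < A x by apply: (my_neq_lt hi _ lqx); rewrite eq_sym.
  have [c [hmc hqc hc lcx]] := mc_next (Good_sym G) hq hxb lqx'.
  rewrite hmc in_cons; apply/orP; right; apply: IH => //.
    by rewrite -ltnS; exact: (leq_trans (mu_decB G p hq (Flt G hqc)) hmu).
  by rewrite hxb lcx hya lpy orbT.
Qed.



Lemma sorted_consec (T : eqType) (R : realType) (A : T -> R) (Rel : rel T) (s : seq T) :
  sorted (fun x y => A x < A y) s ->
  (forall x y, x \in s -> y \in s -> A x < A y ->
     (forall z, z \in s -> A x < A z -> A z < A y -> False) -> Rel x y) ->
  sorted Rel s.
Proof.
elim: s => [|x t IH] //=.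
case: t IH => [|y t] IH //= /andP [lxy hp] h.
apply/andP; split.
  have hx : x \in x :: y :: t by rewrite mem_head.
  have hy : y \in x :: y :: t by rewrite !inE eqxx orbT.
  apply: h hx hy lxy _.
  move=> z; rewrite !in_cons => /orP [/eqP -> | /orP [/eqP -> | hz]].
  - by rewrite ltxx.
  - by move=> _; rewrite ltxx.
  - move=> _ lzy.
    have tr : transitive (fun x y : T => A x < A y).
      by move=> a b c hab hbc; exact: lt_trans hab hbc.
    move/allP: (order_path_min tr hp) => /(_ z hz) lyz.
    by move: (lt_trans lyz lzy); rewrite ltxx.
apply: IH => // a b ha hb lab nb.
have ha' : a \in x :: y :: t by rewrite in_cons ha orbT.
have hb' : b \in x :: y :: t by rewrite in_cons hb orbT.
apply: h ha' hb' lab _.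
move=> z; rewrite in_cons => /orP [/eqP -> | hz]; last exact: nb.
move=> lba _; case/orP: ha => [/eqP ea | ha].
  by subst a; move: (lt_trans lba lxy) ; rewrite ltxx.
have tr : transitive (fun x y : T => A x < A y).
  by move=> a' b' c hab hbc; exact: lt_trans hab hbc.
move/allP: (order_path_min tr hp) => /(_ a ha) lya.
by move: (lt_trans (lt_trans lba lxy) lya) ; rewrite ltxx.
Qed.

Lemma sorted_le_lt (T : eqType) (R : realType) (A : T -> R) (s : seq T) :
  injective A -> uniq s -> sorted (fun x y => A x <= A y) s -> sorted (fun x y => A x < A y) s.
Proof.
move=> hi; elim: s => [|x t IH] //=; case: t IH => [|y t] IH //=.
move=> /andP [hx hu] /andP [lxy hp]; apply/andP; split; last first.
  by apply: IH => //; move: hu.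
rewrite lt_neqAle lxy andbT; apply/eqP => e; move: hx; rewrite (hi _ _ e) mem_head.
by [].
Qed.

Lemma key (R : realType) n (A : 'I_n -> R) F v a1 b1 : Good A F v a1 b1 ->
  forall x y, Sset F v a1 b1 x -> Sset F v a1 b1 y -> A x < A y ->
  (forall z, Sset F v a1 b1 z -> A x < A z -> A z < A y -> False) ->
  (x, y) \in H_arcs A F v a1 b1.
Proof.
move=> G x y Sx Sy lxy nb; case: (G) => hi _ _ _ _.
have inF : Fr F x y -> (x, y) \in H_arcs A F v a1 b1.
  by move=> h; rewrite mem_cat mem_filter /= !(comp_iff G) Sx Sy; rewrite /Fr in h; rewrite h.
have inM : (x, y) \in merge_loop A F n (Some a1) (Some b1) -> (x, y) \in H_arcs A F v a1 b1.
  by move=> h; rewrite mem_cat /subtree_merge h orbT.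
have mun : (mu A F a1 b1 a1 b1 <= n)%N.
  by rewrite /mu; apply: leq_trans (max_card _) _; rewrite card_ord.
have ha1 : connect (Fr F) a1 a1 := connect0 _ _.
have hb1 : connect (Fr F) b1 b1 := connect0 _ _.
case/or3P: Sx => [/eqP ex | hxa | hxb].
- subst x; case/or3P: Sy => [/eqP ey | hya | hyb].
  + by subst y; rewrite ltxx in lxy.
  + case: (eqVneq y a1) => [ey | ne]; first by subst y; exact: (inF (va1 G)).
    exfalso; apply: (nb a1); first by rewrite /Sset ha1 orbT.
      exact: (Flt G (va1 G)).
    by apply: (my_neq_lt hi _ (Fle G hya)); rewrite eq_sym.
  + case: (eqVneq y b1) => [ey | ne]; first by subst y; exact: (inF (va1 (Good_sym G))).
    exfalso; apply: (nb b1); first by rewrite /Sset hb1 !orbT.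
      exact: (Flt G (va1 (Good_sym G))).
    by apply: (my_neq_lt hi _ (Fle G hyb)); rewrite eq_sym.
- case/or3P: Sy => [/eqP ey | hya | hyb].
  + by subst y; move: (lt_trans (ch_gt G hxa) lxy); rewrite ltxx.
  + apply: inF; exact: (same_chain G hxa hya lxy nb).
  + apply: inM; apply: (merge_ok G ha1 hb1 mun lxy nb).
    by rewrite hxa hyb (Fle G hxa) (Fle G hyb).
- case/or3P: Sy => [/eqP ey | hya | hyb].
  + by subst y; move: (lt_trans (ch_gt (Good_sym G) hxb) lxy); rewrite ltxx.
  + apply: inM; apply: (merge_ok G ha1 hb1 mun lxy nb).
    by rewrite hxb hya (Fle G hxb) (Fle G hya) orbT.
  + apply: inF; apply: (same_chain (Good_sym G) hxb hyb lxy).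
    by move=> z; rewrite -Sset_sym; exact: nb.
Qed.

Unset Implicit Arguments.

Theorem theorem9 (R : realType) (n : nat) (A : 'I_n -> R)
  (s : seq 'I_n) (v a1 b1 : 'I_n) :
  injective A ->
  (forall x, x \in s) ->
  let F := dfs_forest A s in
  (forall u, (u, v) \notin F) ->
  a1 != b1 ->
  (forall w, ((v, w) \in F) = (w == a1) || (w == b1)) ->
  ham_path (H_arcs A F v a1 b1) (in_comp F v).
Proof.
move=> hi _ F hv hne hvw.
have G : Good A F v a1 b1.
  split => //.
  - by move=> x y; exact: forest_garc.
  - by move=> x x' y; exact: forest_indeg.
exists (sort (fun x y => A x <= A y) (enum (in_comp F v))).
split.
- by rewrite sort_uniq enum_uniq.
- by move=> x; rewrite mem_sort mem_enum.
- apply: (sorted_consec (A := A)).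
    apply: sorted_le_lt => //; first by rewrite sort_uniq enum_uniq.
    by apply: sort_sorted => x y; exact: le_total.
  move=> x y hx hy lxy nb.
  rewrite mem_sort mem_enum in hx; rewrite mem_sort mem_enum in hy.
  apply: (key G); rewrite -?(comp_iff G) //.
  by move=> z hz; apply: nb; rewrite mem_sort mem_enum; rewrite -(comp_iff G) in hz.
Qed.
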